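(* Let $S = R\cup B$ be a finite set of points in the plane in general position (no three collinear), colored red ($R$) and blue ($B$). If the boundaries of the convex hulls $CH(R)$ and $CH(B)$ intersect each other, then $S$ contains a balanced convex $4$-hole.
   Context: A $4$-hole of $S$ is a simple quadrilateral with vertices in $S$ and no point of $S$ in its interior; it is convex if the quadrilateral is convex, and balanced if it has exactly two red and two blue vertices. $CH(X)$ denotes the convex hull of $X$. *)

(* Defs.v *)
From mathcomp Require Import all_boot all_order all_algebra.
Set Implicit Arguments. Unset Strict Implicit. Unset Printing Implicit Defensive.
Import Order.TTheory GRing.Theory Num.Theory.
Local Open Scope ring_scope.

Section Geom.
Variable R : realFieldType.
Definition pt := (R * R)%type.

Definition orient (a b c : pt) : R :=
  (b.1 - a.1) * (c.2 - a.2) - (b.2 - a.2) * (c.1 - a.1).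

Definition ccw (a b c : pt) : bool := 0 < orient a b c.

Definition general_position (S : seq pt) : Prop :=
  forall a b c, a \in S -> b \in S -> c \in S ->
    a != b -> b != c -> a != c -> orient a b c != 0.

Definition in_hull (X : seq pt) (x : pt) : Prop :=
  exists w : pt -> R,
    (forall p, p \in X -> 0 <= w p) /\
    \sum_(p <- X) w p = 1 /\
    x = (\sum_(p <- X) w p * p.1, \sum_(p <- X) w p * p.2).

Definition dist2 (x y : pt) : R := (x.1 - y.1) ^+ 2 + (x.2 - y.2) ^+ 2.

(* topological boundary (in the plane) of the closed set CH(X) *)
Definition on_hull_boundary (X : seq pt) (x : pt) : Prop :=
  in_hull X x /\
  forall e : R, 0 < e -> exists y : pt, dist2 x y < e /\ ~ in_hull X y.

Definition convex_quad (a b c d : pt) : bool :=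
  [&& ccw a b c, ccw b c d, ccw c d a & ccw d a b].

Definition in_quad_interior (a b c d p : pt) : bool :=
  [&& ccw a b p, ccw b c p, ccw c d p & ccw d a p].

Definition balanced_convex_4hole (red blue : seq pt) : Prop :=
  exists a b c d : pt,
    [/\ all (fun q => q \in red ++ blue) [:: a; b; c; d],
        convex_quad a b c d,
        (forall p, p \in red ++ blue -> ~~ in_quad_interior a b c d p),
        count (fun q => q \in red) [:: a; b; c; d] = 2%N &
        count (fun q => q \in blue) [:: a; b; c; d] = 2%N].
End Geom.

(* Main.v *)
Require Import Defs.
From mathcomp Require Import all_boot all_order all_algebra.
From mathcomp Require Import ring lra.
Set Implicit Arguments. Unset Strict Implicit. Unset Printing Implicit Defensive.
Import Order.TTheory GRing.Theory Num.Theory.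
Local Open Scope ring_scope.

Section S.
Variable R : realFieldType.
Local Notation pt := (R * R)%type.

Definition comb (t : R) (p q : pt) : pt :=
  (t * p.1 + (1 - t) * q.1, t * p.2 + (1 - t) * q.2).

Lemma orient_cyc (a b c : pt) : orient a b c = orient b c a.
Proof. rewrite /orient; ring. Qed.
Lemma orient_sw (a b c : pt) : orient a c b = - orient a b c.
Proof. rewrite /orient; ring. Qed.
Lemma orient_aab (a b : pt) : orient a a b = 0.
Proof. rewrite /orient; ring. Qed.
Lemma orient_abb (a b : pt) : orient a b b = 0.
Proof. rewrite /orient; ring. Qed.
Lemma orient_aba (a b : pt) : orient a b a = 0.
Proof. rewrite /orient; ring. Qed.
Lemma orient_comb (a b p q : pt) t :
  orient a b (comb t p q) = t * orient a b p + (1 - t) * orient a b q.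
Proof. rewrite /orient /comb /=; ring. Qed.
Lemma orient_comb_seg (p q : pt) t : orient p q (comb t p q) = 0.
Proof. rewrite /orient /comb /=; ring. Qed.
Lemma bary (a b c q u v : pt) : orient a b c * orient u v q =
  orient b c q * orient u v a + orient c a q * orient u v b + orient a b q * orient u v c.
Proof. rewrite /orient; ring. Qed.
Lemma comb0 (p z : pt) : comb 0 p z = z.
Proof. case: z => z1 z2; rewrite /comb /=; congr pair; ring. Qed.

Lemma sum_nonneg_eq0 (X : seq pt) (w : pt -> R) :
  (forall u, u \in X -> 0 <= w u) -> \sum_(u <- X) w u = 0 ->
  forall u, u \in X -> w u = 0.
Proof.
elim: X => [|a X IH] //= H; rewrite big_cons => Hs u.
have Ha : 0 <= w a by apply: H; rewrite inE eqxx.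
have HX : forall u, u \in X -> 0 <= w u by move=> v Hv; apply: H; rewrite inE Hv orbT.
have Hs0 : 0 <= \sum_(u <- X) w u by rewrite big_seq; apply: sumr_ge0 => v /HX.
have Hwa : w a = 0 by lra.
have HsX : \sum_(u <- X) w u = 0 by lra.
rewrite inE => /orP [/eqP -> //|]; exact: IH.
Qed.

Lemma in_hull_nil (y : pt) : ~ in_hull [::] y.
Proof. by case=> w [_ [] ]; rewrite big_nil => /eqP; rewrite eq_sym oner_eq0. Qed.

Lemma sum_pick (X : seq pt) (p : pt) (f : pt -> R) : uniq X -> p \in X ->
  \sum_(u <- X) (if u == p then f u else 0) = f p.
Proof.
elim: X => [|a X IH] //= /andP [aX uX]; rewrite big_cons inE.
case: (eqVneq p a) => [E _|ne /= pX].
  subst a; rewrite big_seq big1 ?addr0 // => u uX'; case: eqP => // eup; subst u.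
  by rewrite uX' in aX.
by rewrite add0r IH.
Qed.


Lemma in_hull_pt (X : seq pt) p : uniq X -> p \in X -> in_hull X p.
Proof.
move=> uX pX; exists (fun u => if u == p then 1 else 0); split.
  by move=> u _; case: (u == p).
split.
  by rewrite (sum_pick (fun _ => 1)).
rewrite [LHS]surjective_pairing; congr pair.
  have := sum_pick (fun u => u.1) uX pX => /= <-; apply: eq_bigr => u _.
  by case: (u == _); rewrite ?mul1r ?mul0r.
have := sum_pick (fun u => u.2) uX pX => /= <-; apply: eq_bigr => u _.
by case: (u == _); rewrite ?mul1r ?mul0r.
Qed.

Lemma in_hull_conv (X : seq pt) y z t : in_hull X y -> in_hull X z ->
  0 <= t <= 1 -> in_hull X (comb t y z).
Proof.
move=> [w1 [H1 [S1 E1]]] [w2 [H2 [S2 E2]]] /andP [t0 t1].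
exists (fun u => t * w1 u + (1 - t) * w2 u); split.
  move=> u uX; have := H1 u uX; have := H2 u uX; nra.
split.
  by rewrite big_split /= -!mulr_sumr S1 S2; ring.
rewrite E1 E2 /comb /=; congr pair.
  rewrite !mulr_sumr -big_split /=; apply: eq_bigr => u _; ring.
rewrite !mulr_sumr -big_split /=; apply: eq_bigr => u _; ring.
Qed.

Lemma in_hull_cons (X : seq pt) p z t : p \notin X -> in_hull X z ->
  0 <= t <= 1 -> in_hull (p :: X) (comb t p z).
Proof.
move=> pX [w [H1 [S1 E1]]] /andP [t0 t1].
exists (fun u => if u == p then t else (1 - t) * w u); split.
    move=> u; rewrite inE; case: eqP => //= _ /H1; nra.
have ES : forall f : pt -> R, \sum_(u <- X) (if u == p then t else (1 - t) * w u) * f u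
     = (1 - t) * \sum_(u <- X) w u * f u.
  move=> f; rewrite mulr_sumr big_seq [RHS]big_seq; apply: eq_bigr => u uX.
  have -> : (u == p) = false by apply/eqP => E; subst u; rewrite uX in pX.
  by rewrite mulrA.
split.
  rewrite big_cons eqxx.
  have -> : \sum_(u <- X) (if u == p then t else (1 - t) * w u) = (1 - t) * \sum_(u <- X) w u.
    rewrite mulr_sumr big_seq [RHS]big_seq; apply: eq_bigr => u uX.
    by have -> : (u == p) = false by apply/eqP => E; subst u; rewrite uX in pX.
  rewrite S1; ring.
rewrite E1 /comb /= !big_cons eqxx ES ES //.
Qed.

Lemma decomp (X : seq pt) p y : p \notin X -> in_hull (p :: X) y ->
  y = p \/ exists t z, [/\ 0 <= t < 1, in_hull X z & y = comb t p z].
Proof.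
move=> pX [w [H [S E]]]; rewrite big_cons in S.
have t0 : 0 <= w p by apply: H; rewrite inE eqxx.
have HX : forall u, u \in X -> 0 <= w u by move=> u uX; apply: H; rewrite inE uX orbT.
have sX : 0 <= \sum_(u <- X) w u by rewrite big_seq; apply: sumr_ge0 => u /HX.
case: (eqVneq (w p) 1) => [t1|t1].
  left.
  have s0 : \sum_(u <- X) w u = 0 by lra.
  have W0 := sum_nonneg_eq0 HX s0.
  rewrite E !big_cons !big1_seq ?t1 ?mul1r ?addr0 -?surjective_pairing // => u /W0 ->; rewrite mul0r //.
right; have tl : w p < 1 by rewrite lt_neqAle t1 /=; lra.
have nz : 1 - w p != 0 by rewrite subr_eq0 eq_sym.
exists (w p), ((1 - w p)^-1 * \sum_(u <- X) w u * u.1, (1 - w p)^-1 * \sum_(u <- X) w u * u.2).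
split; first by rewrite t0 tl.
  exists (fun u => (1 - w p)^-1 * w u); split.
    move=> u /HX h; apply: mulr_ge0 => //; rewrite invr_ge0; lra.
  split.
    rewrite -mulr_sumr (_ : \sum_(u <- X) w u = 1 - w p); last by lra.
    by rewrite mulVf.
  by congr pair; rewrite mulr_sumr; apply: eq_bigr => u _; rewrite mulrA.
rewrite E !big_cons /comb /=; congr pair; field; exact: nz.
Qed.

Definition interior (X : seq pt) (y : pt) :=
  exists e, 0 < e /\ forall z, dist2 y z < e -> in_hull X z.

Lemma hull_lift (X : seq pt) p z : p \notin X -> in_hull X z -> in_hull (p :: X) z.
Proof. by move=> pX hz; rewrite -(comb0 p z); apply: in_hull_cons => //; rewrite lexx ler01. Qed.

Lemma interior_lift (X : seq pt) p z t : p \notin X -> interior X z -> 0 <= t < 1 ->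
  interior (p :: X) (comb t p z).
Proof.
move=> pX [e [e0 He]] /andP [t0 t1].
have k0 : 0 < (1 - t) ^+ 2 by rewrite exprn_gt0 // subr_gt0.
have nz : 1 - t != 0 by rewrite subr_eq0 eq_sym lt_eqF.
exists (e * (1 - t) ^+ 2); split; first exact: mulr_gt0.
move=> y' Hd.
pose z' : pt := ((y'.1 - t * p.1) / (1 - t), (y'.2 - t * p.2) / (1 - t)).
have Ed : dist2 (comb t p z) y' = (1 - t) ^+ 2 * dist2 z z'.
  rewrite /dist2 /comb /z' /=; field; exact: nz.
have hz' : in_hull X z'.
  apply: He; rewrite Ed mulrC in Hd; by rewrite -(ltr_pM2r k0).
have -> : y' = comb t p z'.
  rewrite [LHS]surjective_pairing /comb /z' /=; congr pair; field; exact: nz.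
by apply: in_hull_cons => //; rewrite t0 ltW.
Qed.

Lemma hull3 (X : seq pt) p q r (y : pt) a b c : p \notin X -> uniq X -> q \in X -> r \in X ->
  0 < a -> 0 < b -> 0 < c -> a + b + c = 1 ->
  y.1 = a * p.1 + b * q.1 + c * r.1 -> y.2 = a * p.2 + b * q.2 + c * r.2 ->
  in_hull (p :: X) y.
Proof.
move=> pX uX qX rX a0 b0 c0 S E1 E2.
have s0 : 0 < b + c by lra.
have nz : b + c != 0 by rewrite gt_eqF.
have hz : in_hull X (comb (b / (b + c)) q r).
  apply: in_hull_conv; try exact: in_hull_pt.
  apply/andP; split; first by apply: divr_ge0; lra.
  rewrite ler_pdivrMr // mul1r; lra.
have ha : a = 1 - b - c by lra.
have -> : y = comb a p (comb (b / (b + c)) q r).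
  rewrite [LHS]surjective_pairing /comb /= E1 E2 ha; congr pair; field; exact: nz.
apply: in_hull_cons => //; rewrite ltW //=; lra.
Qed.

Lemma sign_helper (a D x : R) : 0 < a -> D != 0 -> x ^+ 2 < (a * D) ^+ 2 -> 0 < (a * D + x) / D.
Proof.
move=> a0 D0 H.
have D2 : 0 < D ^+ 2 by rewrite lt0r sqrf_eq0 D0 sqr_ge0.
have -> : (a * D + x) / D = a + x / D by field.
have : (x / D) ^+ 2 < a ^+ 2.
  rewrite expr_div_n ltr_pdivrMr // -exprMn //.
move=> h; nra.
Qed.

Lemma prod_le (x y z D : R) : 0 < x -> 0 < y -> 0 < z -> y < 1 -> z < 1 ->
  (x * y * z * D) ^+ 2 <= (x * D) ^+ 2.
Proof.
move=> x0 y0 z0 y1 z1.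
rewrite (_ : (x * y * z * D) ^+ 2 = (x * D) ^+ 2 * (y * z) ^+ 2); last by ring.
apply: ler_piMr; first exact: sqr_ge0.
have h1 : 0 < y * z by apply: mulr_gt0.
have h2 : y * z < 1 by nra.
nra.
Qed.

Lemma cs_bound (u v dx dy : R) : (u * dx + v * dy) ^+ 2 <= (u ^+ 2 + v ^+ 2) * (dx ^+ 2 + dy ^+ 2).
Proof.
rewrite -subr_ge0 (_ : _ - _ = (u * dy - v * dx) ^+ 2); last by ring.
exact: sqr_ge0.
Qed.

Lemma tri_interior (X : seq pt) p q r a b :
  p \notin X -> uniq X -> q \in X -> r \in X -> orient p q r != 0 ->
  0 < a -> 0 < b -> 0 < 1 - a - b ->
  interior (p :: X) (a * p.1 + b * q.1 + (1 - a - b) * r.1, a * p.2 + b * q.2 + (1 - a - b) * r.2).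
Proof.
move=> pX uX qX rX D0 a0 b0 c0.
set c := 1 - a - b.
set y := (_, _).
set D := orient p q r.
set U := ((q.2 - r.2) ^+ 2 + (r.1 - q.1) ^+ 2) + ((r.2 - p.2) ^+ 2 + (p.1 - r.1) ^+ 2)
       + ((p.2 - q.2) ^+ 2 + (q.1 - p.1) ^+ 2).
have U0 : 0 <= U by rewrite /U; repeat apply: addr_ge0; apply: sqr_ge0.
set m := (a * b * c * D) ^+ 2.
have D2 : 0 < D ^+ 2 by rewrite lt0r sqrf_eq0 D0 sqr_ge0.
have m0 : 0 < m.
  rewrite /m lt0r sqrf_eq0 !mulf_neq0 ?sqr_ge0 ?andbT // gt_eqF //.
have U1 : 0 < 1 + U by lra.
exists (m / (1 + U)); split; first exact: divr_gt0.
move=> y' Hd.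
rewrite ltr_pdivlMr // in Hd.
set dx := y'.1 - y.1.
set dy := y'.2 - y.2.
have Ed : dist2 y y' = dx ^+ 2 + dy ^+ 2 by rewrite /dist2 /dx /dy; ring.
rewrite Ed in Hd.
have d0 : 0 <= dx ^+ 2 + dy ^+ 2 by apply: addr_ge0; apply: sqr_ge0.
have key : forall u v, u ^+ 2 + v ^+ 2 <= U -> (u * dx + v * dy) ^+ 2 < m.
  move=> u v huv.
  have h1 := cs_bound u v dx dy.
  have h2 : (u ^+ 2 + v ^+ 2) * (dx ^+ 2 + dy ^+ 2) <= U * (dx ^+ 2 + dy ^+ 2).
    exact: ler_wpM2r.
  have h3 : (dx ^+ 2 + dy ^+ 2) * (1 + U) = (dx ^+ 2 + dy ^+ 2) + U * (dx ^+ 2 + dy ^+ 2) by ring.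
  lra.
have sq0 : forall w : R, 0 <= w ^+ 2 by move=> w; apply: sqr_ge0.
have c1 : c < 1 by rewrite /c; lra.
have b1 : b < 1 by rewrite /c in c0; lra.
have a1 : a < 1 by rewrite /c in c0; lra.
have Ea : orient y' q r = a * D + ((q.2 - r.2) * dx + (r.1 - q.1) * dy).
  by rewrite /D /dx /dy /y /c /orient /=; ring.
have Eb : orient p y' r = b * D + ((r.2 - p.2) * dx + (p.1 - r.1) * dy).
  by rewrite /D /dx /dy /y /c /orient /=; ring.
have Ec : orient p q y' = c * D + ((p.2 - q.2) * dx + (q.1 - p.1) * dy).
  by rewrite /D /dx /dy /y /c /orient /=; ring.
have pa : 0 < orient y' q r / D.
  rewrite Ea; apply: sign_helper => //; apply: (lt_le_trans (key _ _ _)).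
    have := sq0 (r.2 - p.2); have := sq0 (p.1 - r.1); have := sq0 (p.2 - q.2); have := sq0 (q.1 - p.1).
    rewrite /U; lra.
  exact: prod_le.
have pb : 0 < orient p y' r / D.
  rewrite Eb; apply: sign_helper => //; apply: (lt_le_trans (key _ _ _)).
    have := sq0 (q.2 - r.2); have := sq0 (r.1 - q.1); have := sq0 (p.2 - q.2); have := sq0 (q.1 - p.1).
    rewrite /U; lra.
  rewrite /m (_ : a * b * c * D = b * a * c * D); last by ring.
  exact: prod_le.
have pc : 0 < orient p q y' / D.
  rewrite Ec; apply: sign_helper => //; apply: (lt_le_trans (key _ _ _)).
    have := sq0 (q.2 - r.2); have := sq0 (r.1 - q.1); have := sq0 (r.2 - p.2); have := sq0 (p.1 - r.1).
    rewrite /U; lra.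
  rewrite /m (_ : a * b * c * D = c * a * b * D); last by ring.
  exact: prod_le.
apply: (hull3 pX uX qX rX pa pb pc).
- rewrite -!mulrDl (_ : _ + _ + _ = D); first by rewrite divff.
  by rewrite /D /orient; ring.
- rewrite (_ : _ + _ + _ = (orient y' q r * p.1 + orient p y' r * q.1 + orient p q y' * r.1) / D);
    last by field.
  rewrite (_ : _ + _ + _ = D * y'.1); first by field.
  by rewrite /D /orient; ring.
- rewrite (_ : _ + _ + _ = (orient y' q r * p.2 + orient p y' r * q.2 + orient p q y' * r.2) / D);
    last by field.
  rewrite (_ : _ + _ + _ = D * y'.2); first by field.
  by rewrite /D /orient; ring.
Qed.

Definition onseg (X : seq pt) (y : pt) :=
  exists p q t, [/\ p \in X, q \in X, p != q, 0 < t < 1 & y = comb t p q].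
Definition gp3 (X : seq pt) := forall a b c, a \in X -> b \in X -> c \in X ->
  a != b -> b != c -> a != c -> orient a b c != 0.

Lemma trich (X : seq pt) : uniq X -> gp3 X -> forall y, in_hull X y ->
  [\/ y \in X, onseg X y | interior X y].
Proof.
elim: X => [|p X IH] /=; first by move=> _ _ y /in_hull_nil.
move=> /andP [pX uX] gp y hy.
have gpX : gp3 X.
  by move=> a b c aX bX cX; apply: gp; rewrite inE ?aX ?bX ?cX orbT.
case: (decomp pX hy) => [->|[t [z [/andP [t0 t1] hz ->]]]].
  by constructor 1; rewrite inE eqxx.
case: (eqVneq t 0) => [t00|tn0].
  subst t; rewrite comb0.
  case: (IH uX gpX z hz) => [zX|[a [b [s [aX bX ab sb E]]]]|hi].
  - by constructor 1; rewrite inE zX orbT.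
  - by constructor 2; exists a, b, s; split => //; rewrite inE ?aX ?bX orbT.
  - by constructor 3; rewrite -(comb0 p z); apply: interior_lift => //; rewrite lexx ltr01.
have tp : 0 < t by rewrite lt_neqAle eq_sym tn0 t0.
case: (IH uX gpX z hz) => [zX|[a [b [s [aX bX ab /andP [s0 s1] E]]]]|hi].
- constructor 2; exists p, z, t; split => //; rewrite ?inE ?eqxx ?zX ?orbT ?tp ?t1 //.
  by apply/eqP => E; subst z; rewrite zX in pX.
- constructor 3.
  have -> : comb t p z = (t * p.1 + ((1 - t) * s) * a.1 + (1 - t - (1 - t) * s) * b.1,
                          t * p.2 + ((1 - t) * s) * a.2 + (1 - t - (1 - t) * s) * b.2).
    by rewrite E /comb /=; congr pair; ring.
  have pa : p != a by apply/eqP => E'; subst a; rewrite aX in pX.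
  have pb : p != b by apply/eqP => E'; subst b; rewrite bX in pX.
  apply: tri_interior => //.
  + by apply: gp; rewrite ?inE ?eqxx ?aX ?bX ?orbT.
  + by apply: mulr_gt0; lra.
  + nra.
- by constructor 3; apply: interior_lift => //; rewrite t0 t1.
Qed.

Lemma bd_cases (X : seq pt) x : uniq X -> gp3 X -> on_hull_boundary X x ->
  x \in X \/ onseg X x.
Proof.
move=> uX gp [hx hb]; case: (trich uX gp hx) => [h|h|[e [e0 He]]]; [by left|by right|].
by case: (hb e e0) => y [hy nh]; case: nh; apply: He.
Qed.

Lemma count_lt (T : eqType) (P P' : pred T) s x : (forall y, P' y -> P y) ->
  x \in s -> P x -> ~~ P' x -> (count P' s < count P s)%N.
Proof.
move=> Hsub; elim: s => //= h s IH; rewrite inE => /orP [/eqP <- | xs] Px nP'.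
  by rewrite (negbTE nP') Px add0n add1n ltnS; apply: sub_count.
have H1 : (P' h <= P h)%N by case: (P' h) (Hsub h) => // /(_ isT) ->.
by rewrite -addnS; apply: leq_add H1 (IH xs Px nP').
Qed.

Lemma quad_sub (a b c d q u v : pt) : convex_quad a b c d -> in_quad_interior a b c d q ->
  0 <= orient u v a -> 0 <= orient u v b -> 0 <= orient u v c -> 0 <= orient u v d ->
  (0 < orient u v a \/ 0 < orient u v c) -> 0 < orient u v q.
Proof.
rewrite /convex_quad /in_quad_interior /ccw => /and4P [h1 h2 h3 h4] /and4P [i1 i2 i3 i4] fa fb fc fd hac.
case: (lerP 0 (orient a c q)) => hq.
  have B := bary c d a q u v.
  have p1 := mulr_ge0 (ltW i4) fc.
  have p2 := mulr_ge0 hq fd.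
  have p3 := mulr_ge0 (ltW i3) fa.
  have : 0 < orient c d a * orient u v q.
    rewrite B; case: hac => hh.
      have := mulr_gt0 i3 hh; lra.
    have := mulr_gt0 i4 hh; lra.
  by rewrite pmulr_rgt0.
have B := bary a b c q u v.
have hq' : 0 < orient c a q by rewrite orient_cyc orient_sw; lra.
have p1 := mulr_ge0 (ltW i2) fa.
have p2 := mulr_ge0 (ltW hq') fb.
have p3 := mulr_ge0 (ltW i1) fc.
have : 0 < orient a b c * orient u v q.
  rewrite B; case: hac => hh.
    have := mulr_gt0 i2 hh; lra.
  have := mulr_gt0 i1 hh; lra.
by rewrite pmulr_rgt0.
Qed.

Lemma ccw_neq12 (x y z : pt) : ccw x y z -> x != y.
Proof. by rewrite /ccw; apply: contraTneq => ->; rewrite orient_aab ltxx. Qed.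
Lemma ccw_neq23 (x y z : pt) : ccw x y z -> y != z.
Proof. by rewrite /ccw; apply: contraTneq => ->; rewrite orient_abb ltxx. Qed.
Lemma ccw_neq13 (x y z : pt) : ccw x y z -> x != z.
Proof. by rewrite /ccw; apply: contraTneq => ->; rewrite orient_aba ltxx. Qed.

Ltac oc0 := first [ assumption | (rewrite orient_cyc; assumption) | (rewrite -orient_cyc; assumption) ].
Ltac oc := rewrite ?orient_aab ?orient_abb ?orient_aba ?lexx //; first [ oc0 | (apply: ltW; oc0) ].

Lemma empty_hole (red blue : seq pt) a b c d : (forall p, p \in red -> p \notin blue) ->
  a \in red -> b \in blue -> c \in red -> d \in blue -> convex_quad a b c d ->
  count (in_quad_interior a b c d) (red ++ blue) = 0%N -> balanced_convex_4hole red blue.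
Proof.
move=> disj aR bB cR dB cq c0.
have bR : (b \in red) = false by apply/negP => /disj; rewrite bB.
have dR : (d \in red) = false by apply/negP => /disj; rewrite dB.
have aB : (a \in blue) = false by apply/negbTE/disj.
have cB : (c \in blue) = false by apply/negbTE/disj.
exists a, b, c, d; split => //.
- by rewrite /= !mem_cat aR bB cR dB !orbT.
- by move=> p pS; move/eqP: c0; rewrite eqn0Ngt -has_count => /hasPn; apply.
- by rewrite /= aR bR cR dR.
- by rewrite /= aB bB cB dB.
Qed.

Lemma hole_ind (red blue : seq pt) : (forall p, p \in red -> p \notin blue) ->
  general_position (red ++ blue) -> forall n a b c d,
  a \in red -> b \in blue -> c \in red -> d \in blue -> convex_quad a b c d ->
  (count (in_quad_interior a b c d) (red ++ blue) <= n)%N -> balanced_convex_4hole red blue.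
Proof.
move=> disj gp; elim=> [|n IH] a b c d aR bB cR dB cq hn.
  by apply: (empty_hole disj aR bB cR dB cq); move: hn; rewrite leqn0 => /eqP.
case: (posnP (count (in_quad_interior a b c d) (red ++ blue))) => [c0|cpos].
  exact: (empty_hole disj aR bB cR dB cq).
move: (cpos); rewrite -has_count => /hasP [p pS pin].
have Hstep : forall a' b' c' d', a' \in red -> b' \in blue -> c' \in red -> d' \in blue ->
    convex_quad a' b' c' d' ->
    (forall q, in_quad_interior a' b' c' d' q -> in_quad_interior a b c d q) ->
    ~~ in_quad_interior a' b' c' d' p -> balanced_convex_4hole red blue.
  move=> a' b' c' d' aR' bB' cR' dB' cq' sub np.
  apply: (IH a' b' c' d') => //; rewrite -ltnS.
  exact: leq_trans (count_lt sub pS pin np) hn.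
have aS : a \in red ++ blue by rewrite mem_cat aR.
have bS : b \in red ++ blue by rewrite mem_cat bB orbT.
have cS : c \in red ++ blue by rewrite mem_cat cR.
have dS : d \in red ++ blue by rewrite mem_cat dB orbT.
have cq0 := cq; have pin0 := pin.
move: cq0 pin0; rewrite /convex_quad /in_quad_interior => /and4P [h1 h2 h3 h4] /and4P [i1 i2 i3 i4].
have pa : p != a by rewrite eq_sym (ccw_neq23 i4).
have pb : p != b by rewrite eq_sym (ccw_neq23 i1).
have pc : p != c by rewrite eq_sym (ccw_neq23 i2).
have pd : p != d by rewrite eq_sym (ccw_neq23 i3).
have ac : a != c by apply: (ccw_neq13 h1).
have bd : b != d by apply: (ccw_neq13 h2).
rewrite /ccw in h1 h2 h3 h4 i1 i2 i3 i4.
case: (boolP (p \in red)) => pR.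
  have o : orient d p b != 0 by apply: gp => //; rewrite eq_sym.
  case: (ltrP 0 (orient d p b)) => o'.
    have cq1 : convex_quad p b c d by apply/and4P; split; rewrite /ccw; oc.
    apply: (Hstep p b c d) => //.
      move=> q jin; have jin' := jin; move: jin'; rewrite /in_quad_interior => /and4P [j1 j2 j3 j4].
      apply/and4P; split => //.
        by rewrite /ccw; apply: (quad_sub cq1 jin); try oc; first [by left; oc | by right; oc].
      by rewrite /ccw; apply: (quad_sub cq1 jin); try oc; first [by left; oc | by right; oc].
    by rewrite /in_quad_interior /ccw orient_aba ltxx.
  have o2 : orient d p b < 0 by rewrite lt_neqAle o o'.
  have cq1 : convex_quad a b p d.
    apply/and4P; split; rewrite /ccw; try oc.
    by rewrite (_ : orient b p d = - orient d p b); [lra | rewrite /orient; ring].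
  apply: (Hstep a b p d) => //.
    move=> q jin; have jin' := jin; move: jin'; rewrite /in_quad_interior => /and4P [j1 j2 j3 j4].
    apply/and4P; split => //.
      by rewrite /ccw; apply: (quad_sub cq1 jin); try oc; first [by left; oc | by right; oc].
    by rewrite /ccw; apply: (quad_sub cq1 jin); try oc; first [by left; oc | by right; oc].
  by rewrite /in_quad_interior /ccw orient_abb ltxx andbF.
have pB : p \in blue by move: pS; rewrite mem_cat (negbTE pR).
have o : orient a p c != 0 by apply: gp => //; rewrite eq_sym.
case: (ltrP 0 (orient a p c)) => o'.
  have cq1 : convex_quad a p c d by apply/and4P; split; rewrite /ccw; oc.
  apply: (Hstep a p c d) => //.
    move=> q jin; have jin' := jin; move: jin'; rewrite /in_quad_interior => /and4P [j1 j2 j3 j4].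
    apply/and4P; split => //.
      by rewrite /ccw; apply: (quad_sub cq1 jin); try oc; first [by left; oc | by right; oc].
    by rewrite /ccw; apply: (quad_sub cq1 jin); try oc; first [by left; oc | by right; oc].
  by rewrite /in_quad_interior /ccw orient_abb ltxx.
have o2 : orient a p c < 0 by rewrite lt_neqAle o o'.
have cq1 : convex_quad a b c p.
  apply/and4P; split; rewrite /ccw; try oc.
  by rewrite (_ : orient c p a = - orient a p c); [lra | rewrite /orient; ring].
apply: (Hstep a b c p) => //.
  move=> q jin; have jin' := jin; move: jin'; rewrite /in_quad_interior => /and4P [j1 j2 j3 j4].
  apply/and4P; split => //.
    by rewrite /ccw; apply: (quad_sub cq1 jin); try oc; first [by left; oc | by right; oc].
  by rewrite /ccw; apply: (quad_sub cq1 jin); try oc; first [by left; oc | by right; oc].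
by rewrite /in_quad_interior /ccw orient_abb ltxx !andbF.
Qed.

Lemma cross_quad (r r' b b' : pt) s t : 0 < s < 1 -> 0 < t < 1 ->
  comb s r r' = comb t b b' -> orient r r' b != 0 ->
  convex_quad r b r' b' \/ convex_quad r b' r' b.
Proof.
move=> /andP [s0 s1] /andP [t0 t1] Ex o.
set K := (r'.1 - r.1) * (b.2 - b'.2) - (r'.2 - r.2) * (b.1 - b'.1).
have O1 : orient r r' b = (1 - t) * K.
  have E : orient r r' b = orient r r' (comb t b b') + (1 - t) * K.
    by rewrite /orient /comb /K /=; ring.
  by rewrite E -Ex orient_comb_seg add0r.
have O2 : orient r r' b' = - (t * K).
  have E : orient r r' b' = orient r r' (comb t b b') - t * K.
    by rewrite /orient /comb /K /=; ring.
  by rewrite E -Ex orient_comb_seg add0r.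
have P1 : orient b b' r = - ((1 - s) * K).
  have E : orient b b' r = orient b b' (comb s r r') - (1 - s) * K.
    by rewrite /orient /comb /K /=; ring.
  by rewrite E Ex orient_comb_seg add0r.
have P2 : orient b b' r' = s * K.
  have E : orient b b' r' = orient b b' (comb s r r') + s * K.
    by rewrite /orient /comb /K /=; ring.
  by rewrite E Ex orient_comb_seg add0r.
have K0 : K != 0 by apply/eqP => K0; move: o; rewrite O1 K0 mulr0 eqxx.
case: (ltrP K 0) => hK.
  left; apply/and4P; split; rewrite /ccw.
  - by rewrite orient_sw O1; nra.
  - by rewrite (_ : orient b r' b' = - orient b b' r'); [rewrite P2; nra | rewrite /orient; ring].
  - by rewrite -orient_cyc O2; nra.
  - by rewrite -orient_cyc P1; nra.
have hK' : 0 < K by rewrite lt_neqAle eq_sym K0 hK.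
right; apply/and4P; split; rewrite /ccw.
- by rewrite orient_sw O2; nra.
- by rewrite -orient_cyc P2; nra.
- by rewrite -orient_cyc O1; nra.
- by rewrite (_ : orient b r b' = - orient b b' r); [rewrite P1; nra | rewrite /orient; ring].
Qed.
End S.

Theorem lemma5 (R : realFieldType) (red blue : seq (R * R)) :
  uniq red -> uniq blue ->
  (forall p, p \in red -> p \notin blue) ->
  general_position (red ++ blue) ->
  (exists x : R * R, on_hull_boundary red x /\ on_hull_boundary blue x) ->
  balanced_convex_4hole red blue.
Proof.
move=> uR uB disj gp [x [hR hB]].
have gpR : gp3 red by move=> a b c aX bX cX; apply: gp; rewrite mem_cat ?aX ?bX ?cX.
have gpB : gp3 blue by move=> a b c aX bX cX; apply: gp; rewrite mem_cat ?aX ?bX ?cX orbT.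
have inS1 : forall y, y \in red -> y \in red ++ blue by move=> y; rewrite mem_cat => ->.
have inS2 : forall y, y \in blue -> y \in red ++ blue by move=> y; rewrite mem_cat => ->; rewrite orbT.
case: (bd_cases uR gpR hR) => [xR|[r [r' [s [rR r'R rr' s01 Ex]]]]];
case: (bd_cases uB gpB hB) => [xB|[b [b' [t [bB b'B bb' t01 Ex']]]]].
- by move: (disj x xR); rewrite xB.
- exfalso.
  have xb : x != b by apply/eqP => E; subst b; move: (disj x xR); rewrite bB.
  have xb' : x != b' by apply/eqP => E; subst b'; move: (disj x xR); rewrite b'B.
  have := gp x b b' (inS1 _ xR) (inS2 _ bB) (inS2 _ b'B) xb bb' xb'.
  by rewrite orient_cyc Ex' orient_comb_seg eqxx.
- exfalso.
  have xr : x != r by apply/eqP => E; subst r; move: (disj x rR); rewrite xB.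
  have xr' : x != r' by apply/eqP => E; subst r'; move: (disj x r'R); rewrite xB.
  have := gp x r r' (inS2 _ xB) (inS1 _ rR) (inS1 _ r'R) xr rr' xr'.
  by rewrite orient_cyc Ex orient_comb_seg eqxx.
have rb : r != b by apply/eqP => E; subst r; move: (disj b rR); rewrite bB.
have r'b : r' != b by apply/eqP => E; subst r'; move: (disj b r'R); rewrite bB.
have o : orient r r' b != 0 by apply: gp => //; [exact: inS1 | exact: inS1 | exact: inS2].
have E : comb s r r' = comb t b b' by rewrite -Ex -Ex'.
case: (cross_quad s01 t01 E o) => cq.
  exact: (hole_ind disj gp rR bB r'R b'B cq (leqnn _)).
exact: (hole_ind disj gp rR b'B r'R bB cq (leqnn _)).
Qed.
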